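(* For every term $t\in T( *,\circ,x)$ and every $f\in\mathcal{G}(\mathtt{ALD})$ such that $t\cdot f$ is defined, we have $\mathcal{C}(t\cdot f)\sim\mathcal{C}(t)\bullet\mathrm{sh}_0(f)$.
   Context: $T( *,\circ,x)$: terms in the single variable $x$ with binary symbols $*,\circ$. Addresses are finite sequences over $\{0,1\}$, $\varepsilon$ empty; $t/\alpha$ the subterm at $\alpha$. Partial operators act on the right, $f\bullet g$ = ''$f$ then $g$'', $f^{-1}$ the inverse partial map. $S^{+}_{\alpha}$: defined iff $t/\alpha=t_1*(t_2\square t_3)$, $\square\in\{*,\circ\}$, replacing it by $(t_1*t_2)\square(t_1*t_3)$; $A^{+}_{\alpha}$: defined iff $t/\alpha=t_1*(t_2*t_3)$, replacing it by $(t_1\circ t_2)*t_3$; $S^-_\alpha,A^-_\alpha$ the inverses. $\mathcal{G}(\mathtt{ALD})$ is the monoid of partial maps generated by these. $\mathrm{sh}_\beta(f)$ applies $f$ to the $\beta$-th subterm. The map $\mathcal{C}:T( *,\circ,x)\to\mathcal{G}(\mathtt{ALD})$ is defined by $\mathcal{C}(x)=\mathrm{id}$, $\mathcal{C}(t_1*t_2)=\mathcal{C}(t_1)\bullet\mathrm{sh}_1(\mathcal{C}(t_2))\bullet S^{+}_{\varepsilon}\bullet\mathrm{sh}_1(\mathcal{C}(t_1))^{-1}$, $\mathcal{C}(t_1\circ t_2)=\mathcal{C}(t_1)\bullet\mathrm{sh}_1(\mathcal{C}(t_2))\bullet A^{+}_{\varepsilon}$. For partial maps $f,g$ on terms, $f\sim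 g$ means there exists at least one term $u$ on which both $f$ and $g$ are defined with $u\cdot f=u\cdot g$. *)

(* Defs.v *)
(* Partial maps on terms are represented as (functional)
   binary relations: [f t u] means "t . f is defined and equals u". *)
From Stdlib Require Import List.
Import ListNotations.

Inductive term : Type :=
| X : term
| Star : term -> term -> term
| Circ : term -> term -> term.

(* addresses: finite sequences over {0,1}; false = 0 (left), true = 1 (right) *)
Definition address := list bool.

Definition pmap := term -> term -> Prop.

Definition pid : pmap := fun t u => t = u.

Definition pcomp (f g : pmap) : pmap := fun t v => exists u, f t u /\ g u v.

Definition pinv (f : pmap) : pmap := fun t u => f u t.

Fixpoint sh (a : address) (f : pmap) : pmap :=
  match a with
  | [] => f
  | b :: a' => fun t u =>
      match t, u with
      | Star t1 t2, Star u1 u2 =>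
          if b then t1 = u1 /\ sh a' f t2 u2 else sh a' f t1 u1 /\ t2 = u2
      | Circ t1 t2, Circ u1 u2 =>
          if b then t1 = u1 /\ sh a' f t2 u2 else sh a' f t1 u1 /\ t2 = u2
      | _, _ => False
      end
  end.

Definition S_root : pmap := fun t u =>
  exists t1 t2 t3,
    (t = Star t1 (Star t2 t3) /\ u = Star (Star t1 t2) (Star t1 t3)) \/
    (t = Star t1 (Circ t2 t3) /\ u = Circ (Star t1 t2) (Star t1 t3)).

Definition A_root : pmap := fun t u =>
  exists t1 t2 t3, t = Star t1 (Star t2 t3) /\ u = Star (Circ t1 t2) t3.

Definition Splus (a : address) : pmap := sh a S_root.
Definition Sminus (a : address) : pmap := pinv (Splus a).
Definition Aplus (a : address) : pmap := sh a A_root.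
Definition Aminus (a : address) : pmap := pinv (Aplus a).

Inductive gen : Type :=
| GSp : address -> gen
| GSm : address -> gen
| GAp : address -> gen
| GAm : address -> gen.

Definition gen_map (g : gen) : pmap :=
  match g with
  | GSp a => Splus a
  | GSm a => Sminus a
  | GAp a => Aplus a
  | GAm a => Aminus a
  end.

Fixpoint word_map (w : list gen) : pmap :=
  match w with
  | [] => pid
  | g :: w' => pcomp (gen_map g) (word_map w')
  end.

Definition in_GALD (f : pmap) : Prop :=
  exists w : list gen, forall t u, f t u <-> word_map w t u.

Fixpoint C (t : term) : pmap :=
  match t with
  | X => pid
  | Star t1 t2 =>
      pcomp (pcomp (pcomp (C t1) (sh [true] (C t2))) (Splus []))
            (pinv (sh [true] (C t1)))
  | Circ t1 t2 =>
      pcomp (pcomp (C t1) (sh [true] (C t2))) (Aplus [])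
  end.

Definition psim (f g : pmap) : Prop := exists u v, f u v /\ g u v.

(* Main.v *)
Require Import Defs.
From Stdlib Require Import List Lia Arith.
Import ListNotations.

Fixpoint kk (t : term) : nat :=
  match t with
  | X => 1
  | Star _ t2 => kk t2
  | Circ t1 t2 => kk t1 + kk t2
  end.

Fixpoint xn (n : nat) : term :=
  match n with
  | 0 => X
  | S m => Star X (xn m)
  end.

Definition presk (g : pmap) := forall t u, g t u -> kk t = kk u.

Lemma sh_presk : forall a g, presk g -> presk (sh a g).
Proof.
  induction a as [|b a IH]; intros g Hg t u H; simpl in *; [now apply Hg|].
  destruct t, u; try contradiction; destruct b; destruct H as [H1 H2];
  subst; simpl; try (f_equal; now apply (IH g Hg)); try now apply (IH g Hg _ _ H2);
  try (rewrite (IH g Hg _ _ H1); reflexivity).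
Qed.

Lemma S_presk : presk S_root.
Proof.
  intros t u (t1 & t2 & t3 & [[-> ->]|[-> ->]]); simpl; lia.
Qed.

Lemma A_presk : presk A_root.
Proof. intros t u (t1 & t2 & t3 & -> & ->); simpl; lia. Qed.

Lemma word_presk : forall w, presk (word_map w).
Proof.
  induction w as [|g w IH]; intros t u H; simpl in *.
  - unfold pid in H; subst; reflexivity.
  - destruct H as (m & H1 & H2). rewrite <- (IH _ _ H2).
    destruct g; simpl in H1; unfold Sminus, Aminus, pinv, Splus, Aplus in H1.
    + exact (sh_presk _ _ S_presk _ _ H1).
    + symmetry; exact (sh_presk _ _ S_presk _ _ H1).
    + exact (sh_presk _ _ A_presk _ _ H1).
    + symmetry; exact (sh_presk _ _ A_presk _ _ H1).
Qed.

Lemma C_comb : forall t, exists N, forall n, N <= n ->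
  kk t <= n /\ C t (xn n) (Star t (xn (n - kk t))).
Proof.
  induction t as [|t1 IH1 t2 IH2|t1 IH1 t2 IH2].
  - exists 1; intros n Hn; split; [simpl; lia|].
    destruct n; [lia|]. simpl. replace (n - 0) with n by lia. reflexivity.
  - destruct IH1 as [N1 H1], IH2 as [N2 H2].
    exists (N1 + N2 + kk t1 + kk t2); intros n Hn; simpl; split; [lia|].
    destruct (H1 n) as [_ A1]; [lia|].
    destruct (H2 (n - kk t1)) as [_ A2]; [lia|].
    destruct (H1 (n - kk t2)) as [_ A3]; [lia|].
    exists (Star (Star t1 t2) (Star t1 (xn (n - kk t1 - kk t2)))); split.
    + exists (Star t1 (Star t2 (xn (n - kk t1 - kk t2)))); split.
      * exists (Star t1 (xn (n - kk t1))); split; [exact A1|]. simpl; auto.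
      * exists t1, t2, (xn (n - kk t1 - kk t2)); left; auto.
    + unfold pinv; simpl; split; [reflexivity|].
      replace (n - kk t1 - kk t2) with (n - kk t2 - kk t1) by lia. exact A3.
  - destruct IH1 as [N1 H1], IH2 as [N2 H2].
    exists (N1 + N2 + kk t1 + kk t2); intros n Hn; simpl; split; [lia|].
    destruct (H1 n) as [_ A1]; [lia|].
    destruct (H2 (n - kk t1)) as [_ A2]; [lia|].
    exists (Star t1 (Star t2 (xn (n - kk t1 - kk t2)))); split.
    + exists (Star t1 (xn (n - kk t1))); split; [exact A1|]. simpl; auto.
    + exists t1, t2, (xn (n - kk t1 - kk t2)); split; [reflexivity|].
      simpl; rewrite Nat.sub_add_distr; reflexivity.
Qed.

Theorem lemma3p5 :
  forall (t : term) (f : pmap), in_GALD f ->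
  forall t' : term, f t t' ->
  psim (C t') (pcomp (C t) (sh [false] f)).
Proof.
  intros t f [w Hw] t' Hf.
  assert (Hk : kk t = kk t') by (apply (word_presk w); now apply Hw).
  destruct (C_comb t) as [N1 H1], (C_comb t') as [N2 H2].
  destruct (H1 (N1 + N2)) as [_ A1]; [lia|].
  destruct (H2 (N1 + N2)) as [_ A2]; [lia|].
  exists (xn (N1 + N2)), (Star t' (xn (N1 + N2 - kk t'))); split; [exact A2|].
  exists (Star t (xn (N1 + N2 - kk t))); split; [exact A1|].
  simpl. rewrite Hk. auto.
Qed.
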